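(* For each $q\ge3$ (uniformly in $\xi_\infty\in[0,2\pi)$), $$\xi_q(\varphi_\infty(\xi_\infty))-\xi_\infty=O_{e_0,c}(1/q^2)\qquad\text{and}\qquad k_q-e_0=O_{e_0,c}(1/q^2),$$ where $O_{e_0,c}(X)$ denotes a quantity bounded in absolute value by $X$ times a constant depending only on $e_0$ and $c$.
   Context: Ellipse with semi-axes $0<b\le a$, eccentricity $e_0=\sqrt{1-b^2/a^2}\in[0,1)$, semi-focal distance $c=\sqrt{a^2-b^2}$. For $0\le k<1$, $F(\varphi;k)=\int_0^\varphi(1-k^2\sin^2\tau)^{-1/2}d\tau$, $K(k)=F(\pi/2;k)$, and $\mathrm{am}(\cdot;k)$ is the inverse function of $F(\cdot;k)$ (Jacobi amplitude). For $\lambda\in(0,b)$, $k_\lambda=\sqrt{(a^2-b^2)/(a^2-\lambda^2)}$, $\omega_\lambda=F(\arcsin(\lambda/b);k_\lambda)/(2K(k_\lambda))$ (strictly increasing from $0$ to $1/2$); for $q\ge3$, $\omega_{\lambda_q}=1/q$ and $k_q=k_{\lambda_q}$. Define $\xi_q(\varphi)=\frac{2\pi}{4K(k_q)}F(\varphi;k_q)$ and $\varphi_\infty(\xi)=\mathrm{am}\big(\frac{4K(e_0)}{2\pi}\xi;e_0\big)$. *)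

(* Defs.v *)
From Stdlib Require Import Reals Lra ClassicalEpsilon.
From Coquelicot Require Import Coquelicot.
Open Scope R_scope.

Definition ellF (phi k : R) : R :=
  RInt (fun t => / sqrt (1 - k ^ 2 * sin t ^ 2)) 0 phi.

Definition ellK (k : R) : R := ellF (PI / 2) k.

(* Jacobi amplitude am(u;k): the inverse function of F(.;k)
   (the unique phi with F(phi;k) = u, which exists for 0 <= k < 1). *)
Definition am (u k : R) : R :=
  epsilon (inhabits 0) (fun phi => ellF phi k = u).

(* Ellipse data, for semi-axes 0 < b <= a. *)
Definition ecc (a b : R) : R := sqrt (1 - b ^ 2 / a ^ 2).
Definition semifocal (a b : R) : R := sqrt (a ^ 2 - b ^ 2).

Definition k_lam (a b lam : R) : R := sqrt ((a ^ 2 - b ^ 2) / (a ^ 2 - lam ^ 2)).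
Definition omega_lam (a b lam : R) : R :=
  ellF (asin (lam / b)) (k_lam a b lam) / (2 * ellK (k_lam a b lam)).

(* lambda_q: the (unique, omega being strictly increasing from 0 to 1/2)
   lambda in (0,b) with omega_lambda = 1/q, for q >= 3. *)
Definition lam_q (a b : R) (q : nat) : R :=
  epsilon (inhabits 0) (fun lam => 0 < lam < b /\ omega_lam a b lam = 1 / INR q).

Definition k_q (a b : R) (q : nat) : R := k_lam a b (lam_q a b q).

Definition xi_q (a b : R) (q : nat) (phi : R) : R :=
  2 * PI / (4 * ellK (k_q a b q)) * ellF phi (k_q a b q).

Definition phi_inf (a b : R) (xi : R) : R :=
  am (4 * ellK (ecc a b) / (2 * PI) * xi) (ecc a b).

(* Main.v *)
Require Import Defs.
From Stdlib Require Import Reals Lra ClassicalEpsilon.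
From Coquelicot Require Import Coquelicot.
Open Scope R_scope.

Definition fk (k t : R) : R := / sqrt (1 - k ^ 2 * sin t ^ 2).

Lemma sin2_le1 t : 0 <= sin t ^ 2 <= 1.
Proof. pose proof (SIN_bound t). split; nra. Qed.

Lemma den_pos k t : k ^ 2 < 1 -> 0 < 1 - k ^ 2 * sin t ^ 2.
Proof. intros. pose proof (sin2_le1 t). assert (0 <= k^2) by nra. nra. Qed.

Lemma fk_cont k t : k ^ 2 < 1 -> continuous (fk k) t.
Proof.
  intros Hk. apply (@ex_derive_continuous R_AbsRing R_NormedModule). unfold fk.
  pose proof (den_pos k t Hk).
  auto_derive. split. lra. split; auto. apply Rgt_not_eq. apply sqrt_lt_R0. lra.
Qed.

Lemma fk_ex k x y : k ^ 2 < 1 -> ex_RInt (fk k) x y.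
Proof. intros. apply (@ex_RInt_continuous R_CompleteNormedModule). intros. now apply fk_cont. Qed.

Lemma ellF_fk phi k : ellF phi k = RInt (fk k) 0 phi.
Proof. reflexivity. Qed.

Lemma fk_ge1 k t : k ^ 2 < 1 -> 1 <= fk k t.
Proof.
  intros Hk. pose proof (den_pos k t Hk). unfold fk.
  assert (0 <= k^2) by nra. pose proof (sin2_le1 t).
  assert (sqrt (1 - k ^ 2 * sin t ^ 2) <= 1).
  { rewrite <- sqrt_1 at 2. apply sqrt_le_1_alt. pose proof (Rmult_le_pos _ _ H0 (proj1 H1)). lra. }
  assert (0 < sqrt (1 - k ^ 2 * sin t ^ 2)) by (apply sqrt_lt_R0; lra).
  rewrite <- Rinv_1 at 1. apply Rinv_le_contravar; lra.
Qed.

Lemma sqrt_ge_m m x : 0 < m -> m ^ 2 <= x -> m <= sqrt x.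
Proof. intros. rewrite <- (sqrt_pow2 m) by lra. apply sqrt_le_1_alt. lra. Qed.

Lemma fk_le k m t : 0 < m -> k ^ 2 <= 1 - m ^ 2 -> fk k t <= / m.
Proof.
  intros Hm Hk. unfold fk. pose proof (sin2_le1 t). assert (0 <= k^2) by nra.
  apply Rinv_le_contravar; auto. apply sqrt_ge_m; auto. nra.
Qed.

Lemma km_lt1 k m : 0 < m -> k ^ 2 <= 1 - m ^ 2 -> k ^ 2 < 1.
Proof. intros. nra. Qed.

Lemma fk_lip k k' m t : 0 < m -> 0 <= k -> 0 <= k' ->
  k ^ 2 <= 1 - m ^ 2 -> k' ^ 2 <= 1 - m ^ 2 ->
  Rabs (fk k t - fk k' t) <= Rabs (k - k') / m ^ 3.
Proof.
  intros Hm Hk Hk' H1 H2. unfold fk. pose proof (sin2_le1 t).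
  set (s := sin t ^ 2) in *.
  set (A := 1 - k^2 * s). set (B := 1 - k'^2 * s).
  assert (HA : m ^ 2 <= A) by (unfold A; nra).
  assert (HB : m ^ 2 <= B) by (unfold B; nra).
  assert (hx : m <= sqrt A) by (apply sqrt_ge_m; auto).
  assert (hy : m <= sqrt B) by (apply sqrt_ge_m; auto).
  assert (ex : sqrt A ^ 2 = A) by (apply pow2_sqrt; nra).
  assert (ey : sqrt B ^ 2 = B) by (apply pow2_sqrt; nra).
  set (x := sqrt A) in *. set (y := sqrt B) in *.
  assert (hk1 : k <= 1) by nra. assert (hk2 : k' <= 1) by nra.
  (* (y - x)(y + x) = B - A = (k^2 - k'^2) s *)
  assert (E : / x - / y = (y - x) / (x * y)) by (field; lra).
  rewrite E.
  assert (E2 : y - x = (k - k') * (k + k') * s / (x + y)).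
  { field_simplify_eq; [| lra]. unfold A, B in *. nra. }
  rewrite E2.
  unfold Rdiv. rewrite !Rabs_mult. rewrite !Rabs_Rinv by nra.
  rewrite (Rabs_pos_eq (k + k')) by lra. rewrite (Rabs_pos_eq s) by lra.
  rewrite (Rabs_pos_eq (x+y)) by lra. rewrite (Rabs_pos_eq (x*y)) by nra.
  pose proof (Rabs_pos (k - k')).
  assert (/ (x + y) <= / (2 * m)) by (apply Rinv_le_contravar; lra).
  assert (/ (x * y) <= / (m * m)) by (apply Rinv_le_contravar; nra).
  assert (0 < / (x+y)) by (apply Rinv_0_lt_compat; lra).
  assert (0 < / (x*y)) by (apply Rinv_0_lt_compat; nra).
  assert ((k + k') * s <= 2) by nra.
  set (d := Rabs (k - k')) in *. set (u := / (x+y)) in *. set (v := / (x*y)) in *.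
  assert (d * ((k + k') * s) <= d * 2) by (apply Rmult_le_compat_l; lra).
  assert (d * ((k + k') * s) * u <= d * 2 * / (2*m)).
  { apply Rle_trans with (d * 2 * u). apply Rmult_le_compat_r; lra.
    apply Rmult_le_compat_l; nra. }
  assert (d * ((k + k') * s) * u * v <= d * 2 * / (2*m) * / (m*m)).
  { apply Rle_trans with (d * 2 * / (2*m) * v). apply Rmult_le_compat_r; lra.
    apply Rmult_le_compat_l; auto. assert (0 < /(2*m)) by (apply Rinv_0_lt_compat; lra). nra. }
  replace (d * (k + k') * s * u * v) with (d * ((k + k') * s) * u * v) by ring.
  replace (d * / m ^ 3) with (d * 2 * / (2*m) * / (m*m)) by (field; lra). lra.
Qed.

Lemma RInt_one x y : RInt (fun _ => 1) x y = y - x.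
Proof. rewrite RInt_const. unfold scal; simpl. unfold mult; simpl. ring. Qed.

Lemma RInt_cst c x y : RInt (fun _ => c) x y = c * (y - x).
Proof. rewrite RInt_const. unfold scal; simpl. unfold mult; simpl. ring. Qed.

Lemma ex_cst c x y : ex_RInt (V:=R_CompleteNormedModule) (fun _ : R => c) x y.
Proof. apply (ex_RInt_const (V:=R_CompleteNormedModule)). Qed.

Lemma fk_int_bounds k m x y : 0 < m -> k ^ 2 <= 1 - m ^ 2 -> x <= y ->
  y - x <= RInt (fk k) x y <= (y - x) / m.
Proof.
  intros Hm Hk Hxy. pose proof (km_lt1 k m Hm Hk). split.
  - rewrite <- RInt_one. apply RInt_le; auto. apply ex_cst. apply fk_ex; auto.
    intros. apply fk_ge1; auto.
  - replace ((y - x) / m) with (/ m * (y - x)) by (field; lra). rewrite <- RInt_cst.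
    apply RInt_le; auto. apply fk_ex; auto. apply ex_cst.
    intros. apply fk_le; auto.
Qed.

Lemma ellF_diff k x y : k ^ 2 < 1 -> ellF y k - ellF x k = RInt (fk k) x y.
Proof.
  intros Hk. rewrite !ellF_fk.
  rewrite <- (RInt_Chasles (fk k) 0 x y) by (apply fk_ex; auto).
  unfold plus; simpl. ring.
Qed.

Lemma ellF_incr k m x y : 0 < m -> k ^ 2 <= 1 - m ^ 2 -> x <= y ->
  y - x <= ellF y k - ellF x k <= (y - x) / m.
Proof.
  intros. rewrite ellF_diff. apply fk_int_bounds; auto. eapply km_lt1; eauto.
Qed.

Lemma ellF_lip_phi k m x y : 0 < m -> k ^ 2 <= 1 - m ^ 2 ->
  Rabs (ellF y k - ellF x k) <= Rabs (y - x) / m.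
Proof.
  intros Hm Hk. destruct (Rle_dec x y).
  - pose proof (ellF_incr k m x y Hm Hk r).
    rewrite !Rabs_pos_eq; lra.
  - pose proof (ellF_incr k m y x Hm Hk ltac:(lra)).
    rewrite Rabs_left1 by lra. rewrite Rabs_left1 by lra.
    replace (- (y - x) / m) with ((x - y)/m) by (field; lra). lra.
Qed.

Lemma ellF_0 k : ellF 0 k = 0.
Proof. unfold ellF. apply (RInt_point (V:=R_CompleteNormedModule)). Qed.

Lemma ellF_pos_bounds k m phi : 0 < m -> k ^ 2 <= 1 - m ^ 2 -> 0 <= phi ->
  phi <= ellF phi k <= phi / m.
Proof.
  intros. pose proof (ellF_incr k m 0 phi H H0 H1). rewrite ellF_0 in H2. lra.
Qed.

Lemma ellF_neg k m phi : 0 < m -> k ^ 2 <= 1 - m ^ 2 -> phi < 0 -> ellF phi k <= phi.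
Proof.
  intros. pose proof (ellF_incr k m phi 0 H H0 ltac:(lra)). rewrite ellF_0 in H2. lra.
Qed.

Lemma ellK_bounds k m : 0 < m -> k ^ 2 <= 1 - m ^ 2 ->
  PI / 2 <= ellK k <= PI / 2 / m.
Proof. intros. unfold ellK. apply ellF_pos_bounds; auto. pose proof PI_RGT_0; lra. Qed.

Lemma ellF_lip_k k k' m phi : 0 < m -> 0 <= k -> 0 <= k' ->
  k ^ 2 <= 1 - m ^ 2 -> k' ^ 2 <= 1 - m ^ 2 -> 0 <= phi ->
  Rabs (ellF phi k - ellF phi k') <= phi * (Rabs (k - k') / m ^ 3).
Proof.
  intros. rewrite !ellF_fk.
  pose proof (km_lt1 k m H H2). pose proof (km_lt1 k' m H H3).
  assert (E : RInt (fk k) 0 phi - RInt (fk k') 0 phi = RInt (fun t => fk k t - fk k' t) 0 phi).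
  { symmetry. apply (RInt_minus (V:=R_CompleteNormedModule)); apply fk_ex; auto. }
  rewrite E. replace phi with (phi - 0) at 2 by ring.
  apply abs_RInt_le_const; auto.
  apply (ex_RInt_minus (V:=R_CompleteNormedModule)); apply fk_ex; auto.
  intros. apply fk_lip; auto.
Qed.

Lemma cont_by_bound (Phi rho : R -> R) x0 :
  continuity_pt rho x0 -> rho x0 = 0 ->
  (forall x, Rabs (Phi x - Phi x0) <= rho x) -> continuity_pt Phi x0.
Proof.
  intros Hr H0 Hb. unfold continuity_pt, continue_in, limit1_in, limit_in in *.
  intros eps He. destruct (Hr eps He) as [alp [Ha H]]. exists alp. split; auto.
  intros x Hx. specialize (H x Hx). simpl in *. unfold R_dist in *.
  rewrite H0 in H. rewrite Rminus_0_r in H. pose proof (Hb x).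
  pose proof (Rle_abs (rho x)). lra.
Qed.

Lemma cont_abs_diff g x0 : continuity_pt g x0 ->
  continuity_pt (fun x => Rabs (g x - g x0)) x0.
Proof.
  intros. change (fun x => Rabs (g x - g x0)) with (comp Rabs (fun x => g x - g x0)).
  apply continuity_pt_comp. apply continuity_pt_minus; auto. apply continuity_pt_const.
  intros u v; reflexivity. apply Rcontinuity_abs.
Qed.

Definition clamp lo hi x := Rmax lo (Rmin hi x).

Lemma clamp_lip lo hi x y : lo <= hi -> Rabs (clamp lo hi x - clamp lo hi y) <= Rabs (x - y).
Proof.
  intros. unfold clamp, Rmax, Rmin.
  repeat (destruct Rle_dec); unfold Rabs; repeat destruct Rcase_abs; lra.
Qed.

Lemma clamp_range lo hi x : lo <= hi -> lo <= clamp lo hi x <= hi.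
Proof. intros. unfold clamp, Rmax, Rmin. repeat destruct Rle_dec; lra. Qed.

Lemma clamp_id lo hi x : lo <= x <= hi -> clamp lo hi x = x.
Proof. intros. unfold clamp, Rmax, Rmin. repeat destruct Rle_dec; lra. Qed.

Lemma clamp_cont lo hi : lo <= hi -> continuity (clamp lo hi).
Proof.
  intros H x0. apply cont_by_bound with (rho := fun x => Rabs (x - x0)).
  apply (cont_abs_diff (fun x => x)). apply continuity_pt_id.
  rewrite Rminus_diag, Rabs_R0; auto.
  intros. apply clamp_lip; auto.
Qed.

Definition kk a b p := k_lam a b (b * sin p).
Definition w a b p := ellF p (kk a b p) / (2 * ellK (kk a b p)).

Lemma kk_sq a b p : 0 < b < a ->
  kk a b p ^ 2 = (a^2 - b^2) / (a^2 - (b * sin p)^2) /\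
  1 - kk a b p ^ 2 = b^2 * cos p ^ 2 / (a^2 - (b * sin p)^2) /\
  a^2 - b^2 <= a^2 - (b * sin p)^2 <= a^2.
Proof.
  intros Hab. pose proof (sin2_le1 p).
  assert (HD : a^2 - b^2 <= a^2 - (b * sin p)^2 <= a^2).
  { assert (0 <= b^2) by nra. replace ((b * sin p)^2) with (b^2 * sin p ^2) by ring. nra. }
  assert (a^2 - b^2 > 0) by nra.
  assert (E : kk a b p ^ 2 = (a^2 - b^2) / (a^2 - (b * sin p)^2)).
  { unfold kk, k_lam. apply pow2_sqrt. apply Rdiv_le_0_compat; lra. }
  split; auto. split; auto. rewrite E.
  pose proof (sin2 p). unfold Rsqr in H1.
  field_simplify_eq; [| lra]. nra.
Qed.

Lemma kk_nonneg a b p : 0 <= kk a b p.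
Proof. apply sqrt_pos. Qed.

Lemma kk_bound a b p d : 0 < b < a -> 0 <= d -> d <= cos p ->
  kk a b p ^ 2 <= 1 - (b * d / a) ^ 2.
Proof.
  intros Hab Hd Hc. destruct (kk_sq a b p Hab) as [_ [E HD]].
  assert (b ^ 2 * cos p ^ 2 / (a ^ 2 - (b * sin p) ^ 2) >= (b * d / a) ^ 2).
  { apply Rle_ge. assert (a^2 - b^2 > 0) by nra.
    replace ((b * d / a) ^ 2) with (b^2 * d^2 / a^2) by (field; lra).
    apply Rle_trans with (b^2 * cos p ^2 / a^2).
    - unfold Rdiv. apply Rmult_le_compat_r. apply Rlt_le, Rinv_0_lt_compat; nra.
      apply Rmult_le_compat_l; nra.
    - unfold Rdiv. apply Rmult_le_compat_l. nra. apply Rinv_le_contravar; lra. }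
  lra.
Qed.

Lemma kk_cont a b p : 0 < b < a -> continuity_pt (kk a b) p.
Proof.
  intros Hab. apply continuity_pt_filterlim.
  destruct (kk_sq a b p Hab) as [_ [_ HD]].
  assert (a^2 - b^2 > 0) by nra.
  apply (@ex_derive_continuous R_AbsRing R_NormedModule). unfold kk, k_lam.
  auto_derive. split; [|split; auto].
  - intro. nra.
  - apply Rdiv_lt_0_compat; nra.
Qed.

Lemma w_comp_cont a b m P : 0 < b < a -> 0 < m ->
  (forall x, 0 <= P x /\ kk a b (P x) ^ 2 <= 1 - m ^ 2) -> continuity P ->
  continuity (fun x => w a b (P x)).
Proof.
  intros Hab Hm HP HPc x0.
  set (g := fun x => kk a b (P x)).
  assert (Hg : continuity_pt g x0).
  { change g with (comp (kk a b) P). apply continuity_pt_comp; auto. apply kk_cont; auto. }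
  pose proof (HP x0) as [HP0 Hk0].
  assert (C1 : continuity_pt (fun x => ellF (P x) (g x)) x0).
  { apply cont_by_bound with
      (rho := fun x => / m * Rabs (P x - P x0) + (P x0 / m ^ 3) * Rabs (g x - g x0)).
    - apply (continuity_pt_plus (fun x => / m * Rabs (P x - P x0))
               (fun x => (P x0 / m ^ 3) * Rabs (g x - g x0))).
      + apply (continuity_pt_scal (fun x => Rabs (P x - P x0))). apply cont_abs_diff; auto.
      + apply (continuity_pt_scal (fun x => Rabs (g x - g x0))). apply cont_abs_diff; auto.
    - rewrite !Rminus_diag, Rabs_R0. ring.
    - intros x. pose proof (HP x) as [HPx Hkx].
      replace (ellF (P x) (g x) - ellF (P x0) (g x0)) with
        ((ellF (P x) (g x) - ellF (P x0) (g x)) + (ellF (P x0) (g x) - ellF (P x0) (g x0))) by ring.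
      eapply Rle_trans. apply Rabs_triang.
      apply Rplus_le_compat.
      + pose proof (ellF_lip_phi (g x) m (P x0) (P x) Hm Hkx). unfold Rdiv in H. lra.
      + pose proof (ellF_lip_k (g x) (g x0) m (P x0) Hm (kk_nonneg _ _ _) (kk_nonneg _ _ _) Hkx Hk0 HP0).
        unfold Rdiv in *. lra. }
  assert (C2 : continuity_pt (fun x => 2 * ellK (g x)) x0).
  { apply (continuity_pt_scal (fun x => ellK (g x))).
    apply cont_by_bound with (rho := fun x => (PI / 2 / m ^ 3) * Rabs (g x - g x0)).
    - apply (continuity_pt_scal (fun x => Rabs (g x - g x0))). apply cont_abs_diff; auto.
    - rewrite !Rminus_diag, Rabs_R0. ring.
    - intros x. pose proof (HP x) as [HPx Hkx]. unfold ellK.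
      pose proof PI_RGT_0.
      pose proof (ellF_lip_k (g x) (g x0) m (PI/2) Hm (kk_nonneg _ _ _) (kk_nonneg _ _ _) Hkx Hk0 ltac:(lra)).
      unfold Rdiv in *. lra. }
  apply (continuity_pt_div (fun x => ellF (P x) (g x)) (fun x => 2 * ellK (g x))); auto.
  pose proof (ellK_bounds (g x0) m Hm Hk0). pose proof PI_RGT_0. lra.
Qed.

Lemma sin_ge_third th : 0 <= th <= PI / 2 -> th / 3 <= sin th.
Proof.
  intros H. pose proof PI_4. pose proof PI_RGT_0.
  assert (Hs : sin_lb th <= sin th) by (apply SIN; lra).
  assert (E : sin_lb th = th - th^3/6 + th^5/120 - th^7/5040).
  { unfold sin_lb, sin_approx, sin_term. simpl sum_f_R0. simpl. field. }
  rewrite E in Hs.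
  assert (th <= 2) by lra.
  assert (0 <= th^2 <= 4) by nra.
  assert (th^5/120 - th^7/5040 >= 0).
  { replace (th^5/120 - th^7/5040) with (th^5 * (42 - th^2) / 5040) by field.
    assert (0 <= th^5) by (apply pow_le; lra). apply Rle_ge.
    apply Rdiv_le_0_compat; nra. }
  assert (th - th^3/6 >= th / 3).
  { replace (th - th^3/6 - th/3) with (th * (4 - th^2) / 6) by field. nra. }
  lra.
Qed.

Lemma cos_le_shift t : 0 <= t <= PI / 2 -> 0 <= cos t <= PI / 2 - t.
Proof.
  intros H. split. apply cos_ge_0; lra.
  rewrite <- sin_shift. destruct (Req_dec t (PI/2)).
  - subst. replace (PI/2 - PI/2) with 0 by ring. rewrite sin_0. lra.
  - left. apply sin_lt_x. lra.
Qed.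

Lemma shift_le_cos p : 0 <= p <= PI / 2 -> PI / 2 - p <= 3 * cos p.
Proof.
  intros H. rewrite <- sin_shift. pose proof (sin_ge_third (PI/2 - p) ltac:(lra)). lra.
Qed.

Definition dlt a b := (PI / 2) * exp (- (6 * a / b + 1)) / (b / sqrt (a^2 - b^2) + 3).

Lemma dlt_range a b : 0 < b < a -> 0 < dlt a b < 1.
Proof.
  intros Hab. unfold dlt. pose proof PI_4. pose proof PI_RGT_0.
  assert (0 < sqrt (a^2 - b^2)) by (apply sqrt_lt_R0; nra).
  assert (0 < b / sqrt (a^2 - b^2)) by (apply Rdiv_lt_0_compat; lra).
  assert (exp (- (6 * a / b + 1)) < 1).
  { apply Rlt_le_trans with (exp 0); [| rewrite exp_0; lra]. apply exp_increasing.
    assert (0 < 6 * a / b) by (apply Rdiv_lt_0_compat; lra). lra. }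
  pose proof (exp_pos (- (6 * a / b + 1))).
  split. apply Rdiv_lt_0_compat; nra.
  apply (Rmult_lt_reg_r (b / sqrt (a ^ 2 - b ^ 2) + 3)). lra.
  unfold Rdiv at 1. rewrite Rmult_assoc, Rinv_l by lra. nra.
Qed.

Lemma int_inv E p : 0 < E -> 0 <= p <= PI / 2 ->
  RInt (fun t => / (E + PI / 2 - t)) 0 p = ln (E + PI / 2) - ln (E + PI / 2 - p).
Proof.
  intros HE Hp.
  apply is_RInt_unique.
  assert (H := is_RInt_derive (V:=R_CompleteNormedModule) (fun t => - ln (E + PI / 2 - t)) (fun t => / (E + PI / 2 - t)) 0 p).
  unfold minus, plus, opp in H; simpl in H.
  replace (ln (E + PI / 2) - ln (E + PI / 2 - p)) with
    (- ln (E + PI / 2 - p) + - - ln (E + PI / 2 - 0)) by (rewrite Rminus_0_r; ring).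
  apply H.
  - intros x Hx. rewrite Rmin_left, Rmax_right in Hx by lra.
    auto_derive. lra. field. lra.
  - intros x Hx. rewrite Rmin_left, Rmax_right in Hx by lra.
    apply (@ex_derive_continuous R_AbsRing R_NormedModule). auto_derive. lra.
Qed.

Lemma w_big a b p : 0 < b < a -> 0 < p < PI / 2 -> cos p <= dlt a b -> 1 / 3 < w a b p.
Proof.
  intros Hab Hp Hc. pose proof PI_RGT_0 as Hpi.
  assert (Hc2 : a^2 - b^2 > 0) by nra.
  set (c := sqrt (a^2 - b^2)).
  assert (Hc0 : 0 < c) by (apply sqrt_lt_R0; lra).
  assert (Ec : c^2 = a^2 - b^2) by (apply pow2_sqrt; lra).
  assert (Hcp : 0 < cos p) by (apply cos_gt_0; lra).
  set (cp := cos p) in *.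
  set (k := kk a b p).
  destruct (kk_sq a b p Hab) as [Ek [Ek1 HD]]. fold k in Ek, Ek1.
  set (m1 := b * cp / a).
  assert (Hm1 : 0 < m1) by (unfold m1; apply Rdiv_lt_0_compat; nra).
  assert (Hk1 : k^2 <= 1 - m1^2) by (exact (kk_bound a b p cp Hab ltac:(lra) ltac:(unfold cp; lra))).
  assert (Hk : k^2 < 1) by (eapply km_lt1; eauto).
  set (R := RInt (fk k) p (PI / 2)).
  assert (HR : PI/2 - p <= R <= (PI/2 - p) / m1) by (apply fk_int_bounds; lra).
  assert (HR2 : R <= 3 * a / b).
  { pose proof (shift_le_cos p ltac:(lra)). fold cp in H.
    apply Rle_trans with (3 * cp / m1).
    - apply Rle_trans with ((PI / 2 - p) / m1). lra. unfold Rdiv. apply Rmult_le_compat_r.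
      apply Rlt_le, Rinv_0_lt_compat; lra. lra.
    - right. unfold m1. field. lra. }
  set (F := ellF p k).
  assert (HK : ellK k = F + R).
  { unfold ellK, F, R. rewrite <- (ellF_diff k p (PI/2) Hk). ring. }
  set (E := b * cp / c).
  assert (HE : 0 < E) by (unfold E; apply Rdiv_lt_0_compat; nra).
  assert (HE1 : 1 - k^2 <= E^2).
  { rewrite Ek1. unfold E. replace ((b * cp / c)^2) with (b^2 * cp^2 / c^2) by (field; lra).
    unfold Rdiv. apply Rmult_le_compat_l. nra. apply Rinv_le_contravar; nra. }
  assert (Hpt : forall t, 0 < t < p -> / (E + PI / 2 - t) <= fk k t).
  { intros t Ht. unfold fk. pose proof (cos_le_shift t ltac:(lra)).
    pose proof (den_pos k t Hk).
    assert (Hs : 1 - k ^ 2 * sin t ^ 2 = (1 - k^2) + k^2 * cos t ^ 2).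
    { pose proof (sin2_cos2 t). unfold Rsqr in H1. nra. }
    assert (0 <= k^2) by nra.
    assert (1 - k ^ 2 * sin t ^ 2 <= (E + PI / 2 - t)^2).
    { rewrite Hs. assert (k^2 * cos t ^2 <= cos t ^2) by nra. nra. }
    apply Rinv_le_contravar. apply sqrt_lt_R0; lra.
    rewrite <- (sqrt_pow2 (E + PI / 2 - t)) by lra. apply sqrt_le_1_alt. lra. }
  assert (HF : ln (E + PI / 2) - ln (E + PI / 2 - p) <= F).
  { rewrite <- int_inv by lra. unfold F. rewrite ellF_fk.
    apply RInt_le. lra.
    - apply (@ex_RInt_continuous R_CompleteNormedModule). intros.
      rewrite Rmin_left, Rmax_right in H by lra.
      apply (@ex_derive_continuous R_AbsRing R_NormedModule). auto_derive. lra.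
    - apply fk_ex; auto.
    - intros; apply Hpt; lra. }
  assert (HEp : E + PI / 2 - p <= (PI / 2) * exp (- (6 * a / b + 1))).
  { pose proof (shift_le_cos p ltac:(lra)). fold cp in H.
    assert (E + PI / 2 - p <= (b / c + 3) * cp).
    { unfold E. replace ((b / c + 3) * cp) with (b * cp / c + 3 * cp) by (field; lra). lra. }
    assert (0 < b / c) by (apply Rdiv_lt_0_compat; lra).
    unfold dlt in Hc. fold c in Hc.
    apply Rle_trans with ((b / c + 3) * cp). lra.
    apply Rle_trans with ((b / c + 3) * (PI / 2 * exp (- (6 * a / b + 1)) / (b / c + 3))).
    apply Rmult_le_compat_l; lra. right. field. lra. }
  assert (HL : 6 * a / b + 1 <= F).
  { assert (ln (PI / 2) <= ln (E + PI / 2)) by (apply ln_le; lra).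
    assert (ln (E + PI / 2 - p) <= ln (PI / 2 * exp (- (6 * a / b + 1)))) by (apply ln_le; lra).
    rewrite ln_mult, ln_exp in H0 by (try apply exp_pos; lra). lra. }
  unfold w. fold k. fold F. rewrite HK.
  assert (0 <= R) by lra.
  apply (Rmult_lt_reg_r (3 * (2 * (F + R)))). lra.
  unfold Rdiv. replace (F * / (2 * (F + R)) * (3 * (2 * (F + R)))) with (3 * F) by (field; lra).
  assert (2 * R < F) by lra. lra.
Qed.

Lemma psi2_props a b : 0 < b < a ->
  0 < acos (dlt a b) < PI / 2 /\ cos (acos (dlt a b)) = dlt a b.
Proof.
  intros Hab. pose proof (dlt_range a b Hab). pose proof PI_RGT_0.
  assert (E : cos (acos (dlt a b)) = dlt a b) by (apply cos_acos; lra).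
  pose proof (acos_bound_lt (dlt a b) ltac:(lra)).
  split; auto. split. lra.
  destruct (Rlt_dec (acos (dlt a b)) (PI/2)); auto.
  pose proof (cos_le_0 (acos (dlt a b)) ltac:(lra) ltac:(lra)). lra.
Qed.

Lemma region a b p : 0 < b < a -> 0 <= p <= acos (dlt a b) ->
  kk a b p ^ 2 <= 1 - (b * dlt a b / a) ^ 2.
Proof.
  intros Hab Hp. destruct (psi2_props a b Hab) as [H1 H2]. pose proof (dlt_range a b Hab).
  apply kk_bound; auto. lra.
  destruct (Req_dec p (acos (dlt a b))).
  - subst. lra.
  - pose proof (cos_decreasing_1 p (acos (dlt a b))). pose proof PI_RGT_0.
    assert (cos (acos (dlt a b)) < cos p) by (apply H3; lra). lra.
Qed.

Lemma mpos a b : 0 < b < a -> 0 < b * dlt a b / a.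
Proof. intros. pose proof (dlt_range a b H). apply Rdiv_lt_0_compat; nra. Qed.

Lemma lam_exists a b q : 0 < b < a -> (3 <= q)%nat ->
  exists lam, 0 < lam < b /\ omega_lam a b lam = 1 / INR q.
Proof.
  intros Hab Hq. pose proof PI_RGT_0 as Hpi.
  assert (HQ : 3 <= INR q) by (replace 3 with (INR 3) by (simpl; ring); apply le_INR; auto).
  set (Q := INR q) in *.
  destruct (psi2_props a b Hab) as [Hp2 Hc2]. pose proof (dlt_range a b Hab) as Hd.
  set (d := dlt a b) in *. set (p2 := acos d) in *.
  set (m := b * d / a). assert (Hm : 0 < m) by apply mpos, Hab.
  set (p1 := Rmin (PI * m / (2 * Q)) (p2 / 2)).
  assert (Hp1 : 0 < p1 < p2).
  { unfold p1. split. apply Rmin_glb_lt. apply Rdiv_lt_0_compat. apply Rmult_lt_0_compat; lra. lra. lra.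
    pose proof (Rmin_r (PI * m / (2 * Q)) (p2 / 2)). lra. }
  assert (W1 : w a b p1 < 1 / Q).
  { unfold w. pose proof (region a b p1 Hab ltac:(fold d p2; lra)) as Hk. fold d m in Hk.
    pose proof (ellF_pos_bounds _ m p1 Hm Hk ltac:(lra)).
    pose proof (ellK_bounds _ m Hm Hk).
    set (F := ellF p1 (kk a b p1)) in *. set (K := ellK (kk a b p1)) in *.
    assert (F / (2 * K) <= p1 / m / PI).
    { apply Rle_trans with (p1 / m / (2 * K)).
      unfold Rdiv. apply Rmult_le_compat_r. apply Rlt_le, Rinv_0_lt_compat; lra. lra.
      unfold Rdiv. apply Rmult_le_compat_l. apply Rmult_le_pos. lra. apply Rlt_le, Rinv_0_lt_compat; lra.
      apply Rinv_le_contravar; lra. }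
    assert (p1 <= PI * m / (2 * Q)) by apply Rmin_l.
    assert (p1 / m / PI <= 1 / (2 * Q)).
    { replace (1 / (2 * Q)) with ((PI * m / (2 * Q)) / m / PI) by (field; lra).
      unfold Rdiv. apply Rmult_le_compat_r. apply Rlt_le, Rinv_0_lt_compat; lra.
      apply Rmult_le_compat_r. apply Rlt_le, Rinv_0_lt_compat; lra. lra. }
    assert (1 / (2 * Q) < 1 / Q).
    { unfold Rdiv. rewrite !Rmult_1_l. apply Rinv_lt_contravar; nra. }
    lra. }
  assert (W2 : 1 / Q < w a b p2).
  { apply Rle_lt_trans with (1/3).
    unfold Rdiv. rewrite !Rmult_1_l. apply Rinv_le_contravar; lra.
    apply w_big; auto; fold d; lra. }
  set (h := fun x => w a b (clamp p1 p2 x)).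
  assert (Hh : continuity h).
  { apply (w_comp_cont a b m); auto.
    - intros x. pose proof (clamp_range p1 p2 x ltac:(lra)). split. lra.
      apply region; auto. fold d p2. lra.
    - apply clamp_cont; lra. }
  assert (E1 : h p1 = w a b p1) by (unfold h; rewrite clamp_id; auto; lra).
  assert (E2 : h p2 = w a b p2) by (unfold h; rewrite clamp_id; auto; lra).
  destruct (IVT_gen h p1 p2 (1 / Q) Hh) as [x [Hx Hhx]].
  { rewrite E1, E2. pose proof (Rmin_l (w a b p1) (w a b p2)). pose proof (Rmax_r (w a b p1) (w a b p2)). lra. }
  rewrite Rmin_left, Rmax_right in Hx by lra.
  unfold h in Hhx. rewrite clamp_id in Hhx by lra.
  exists (b * sin x).
  assert (0 < sin x) by (apply sin_gt_0; lra).
  assert (sin x < 1) by (rewrite <- sin_PI2; apply sin_increasing_1; lra).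
  split. split; nra.
  unfold omega_lam. replace (b * sin x / b) with (sin x) by (field; lra).
  rewrite asin_sin by lra. exact Hhx.
Qed.

Lemma kq_props a b q : 0 < b < a -> (3 <= q)%nat ->
  0 < lam_q a b q < b /\ k_q a b q ^ 2 <= 1 - (b * dlt a b / a) ^ 2 /\
  lam_q a b q <= b * PI / ((b * dlt a b / a) * INR q) /\
  k_q a b q ^ 2 = (a^2 - b^2) / (a^2 - lam_q a b q ^ 2).
Proof.
  intros Hab Hq. pose proof PI_RGT_0 as Hpi.
  assert (HQ : 3 <= INR q) by (replace 3 with (INR 3) by (simpl; ring); apply le_INR; auto).
  pose proof (epsilon_spec (inhabits 0) (fun lam => 0 < lam < b /\ omega_lam a b lam = 1 / INR q)
     (lam_exists a b q Hab Hq)) as [Hl Ho].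
  fold (lam_q a b q) in Hl, Ho.
  set (l := lam_q a b q) in *. set (Q := INR q) in *.
  set (p := asin (l / b)).
  assert (Hlb : 0 < l / b < 1).
  { split. apply Rdiv_lt_0_compat; lra.
    apply (Rmult_lt_reg_r b). lra. unfold Rdiv. rewrite Rmult_assoc, Rinv_l; lra. }
  assert (Hs : sin p = l / b) by (apply sin_asin; lra).
  pose proof (asin_bound (l / b)) as Hpb. fold p in Hpb.
  assert (Hp : 0 < p < PI / 2).
  { split.
    - destruct (Rlt_dec 0 p); auto.
      pose proof (sin_incr_1 p 0 ltac:(lra) ltac:(lra) ltac:(lra) ltac:(lra) ltac:(lra)).
      rewrite sin_0 in H. lra.
    - destruct (Rlt_dec p (PI/2)); auto. assert (p = PI/2) by lra.
      rewrite H, sin_PI2 in Hs. lra. }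
  assert (El : l = b * sin p) by (rewrite Hs; field; lra).
  assert (Ek : k_q a b q = kk a b p) by (unfold k_q, kk; fold l; rewrite <- El; reflexivity).
  assert (Hw : w a b p = 1 / Q).
  { unfold omega_lam in Ho. fold p in Ho. unfold w. rewrite <- Ek. exact Ho. }
  set (d := dlt a b) in *. set (m := b * d / a).
  pose proof (dlt_range a b Hab) as Hd. fold d in Hd.
  assert (Hm : 0 < m) by apply mpos, Hab.
  assert (Hc : d < cos p).
  { destruct (Rlt_dec d (cos p)); auto.
    pose proof (w_big a b p Hab Hp ltac:(fold d; lra)).
    assert (1 / Q <= 1 / 3) by (unfold Rdiv; rewrite !Rmult_1_l; apply Rinv_le_contravar; lra).
    lra. }
  assert (Hk : kk a b p ^ 2 <= 1 - m ^ 2) by (apply kk_bound; lra).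
  set (k := kk a b p) in *.
  pose proof (ellF_pos_bounds k m p Hm Hk ltac:(lra)) as HF.
  pose proof (ellK_bounds k m Hm Hk) as HK.
  assert (EF : ellF p k = 2 * ellK k / Q).
  { unfold w in Hw. fold k in Hw.
    assert (ellF p k = (ellF p k / (2 * ellK k)) * (2 * ellK k)) by (field; lra).
    rewrite H, Hw. field. lra. }
  assert (Hpq : p <= PI / (m * Q)).
  { apply Rle_trans with (ellF p k). lra. rewrite EF.
    replace (PI / (m * Q)) with (2 * (PI / 2 / m) / Q) by (field; lra).
    unfold Rdiv. apply Rmult_le_compat_r. apply Rlt_le, Rinv_0_lt_compat; lra. lra. }
  split. lra. split. rewrite Ek. exact Hk. split.
  - rewrite El. pose proof (sin_lt_x p ltac:(lra)).
    replace (b * PI / (m * Q)) with (b * (PI / (m * Q))) by (field; lra).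
    apply Rmult_le_compat_l; lra.
  - rewrite Ek. unfold k. destruct (kk_sq a b p Hab) as [E _]. rewrite E, El. reflexivity.
Qed.

Lemma ellF_cont e m : 0 < m -> e ^ 2 <= 1 - m ^ 2 -> continuity (fun x => ellF x e).
Proof.
  intros Hm He x0. apply cont_by_bound with (rho := fun x => / m * Rabs (x - x0)).
  - apply (continuity_pt_scal (fun x => Rabs (x - x0))). apply (cont_abs_diff (fun x => x)).
    apply continuity_pt_id.
  - rewrite Rminus_diag, Rabs_R0. ring.
  - intros x. pose proof (ellF_lip_phi e m x0 x Hm He). unfold Rdiv in H. lra.
Qed.

Lemma alg_bound F1 u K1 K0 d m phi : 0 < m -> 0 <= phi <= u -> u <= 2 * PI / m ->
  PI / 2 <= K1 -> PI / 2 <= K0 -> 0 <= d ->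
  Rabs (F1 - u) <= phi * (d / m ^ 3) -> Rabs (K1 - K0) <= PI / 2 * (d / m ^ 3) ->
  Rabs (2 * PI / (4 * K1) * F1 - 2 * PI * u / (4 * K0)) <= 4 * PI / m ^ 4 * d.
Proof.
  intros Hm Hphi Hu HK1 HK0 Hd H1 H2. pose proof PI_RGT_0 as Hpi.
  assert (E : 2 * PI / (4 * K1) * F1 - 2 * PI * u / (4 * K0) =
              PI / 2 * ((F1 - u) / K1 + u * ((K0 - K1) / (K1 * K0)))) by (field; lra).
  rewrite E, Rabs_mult, (Rabs_pos_eq (PI/2)) by lra.
  set (D := d / m ^ 3) in *.
  assert (HD : 0 <= D) by (unfold D; apply Rdiv_le_0_compat; [lra | apply pow_lt; lra]).
  assert (A1 : Rabs ((F1 - u) / K1) <= u * D / (PI / 2)).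
  { unfold Rdiv. rewrite Rabs_mult, Rabs_Rinv, (Rabs_pos_eq K1) by lra.
    apply Rle_trans with (u * D * / K1).
    apply Rmult_le_compat_r. apply Rlt_le, Rinv_0_lt_compat; lra. nra.
    apply Rmult_le_compat_l. nra. apply Rinv_le_contravar; lra. }
  assert (A2 : Rabs (u * ((K0 - K1) / (K1 * K0))) <= u * (PI / 2 * D) / (PI / 2 * (PI / 2))).
  { unfold Rdiv. rewrite !Rabs_mult, Rabs_Rinv, (Rabs_pos_eq u), (Rabs_pos_eq (K1 * K0)) by nra.
    rewrite <- Rabs_Ropp. replace (- (K0 - K1)) with (K1 - K0) by ring.
    rewrite Rmult_assoc. apply Rmult_le_compat_l. lra.
    apply Rmult_le_compat. apply Rabs_pos. apply Rlt_le, Rinv_0_lt_compat; nra. lra.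
    apply Rinv_le_contravar; nra. }
  pose proof (Rabs_triang ((F1 - u) / K1) (u * ((K0 - K1) / (K1 * K0)))).
  assert (S : u * D / (PI / 2) + u * (PI / 2 * D) / (PI / 2 * (PI / 2)) = 4 * u * D / PI) by (field; lra).
  assert (4 * u * D / PI <= 8 * D / m) .
  { apply Rle_trans with (4 * (2 * PI / m) * D / PI).
    unfold Rdiv. apply Rmult_le_compat_r. apply Rlt_le, Rinv_0_lt_compat; lra.
    apply Rmult_le_compat_r; lra. right. field. lra. }
  replace (4 * PI / m ^ 4 * d) with (PI / 2 * (8 * D / m)) by (unfold D; field; lra).
  apply Rmult_le_compat_l. lra. lra.
Qed.

Lemma xi_bound k e m xi : 0 < m -> 0 <= k -> 0 <= e -> k ^ 2 <= 1 - m ^ 2 -> e ^ 2 <= 1 - m ^ 2 ->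
  0 <= xi < 2 * PI ->
  Rabs (2 * PI / (4 * ellK k) * ellF (am (4 * ellK e / (2 * PI) * xi) e) k - xi)
    <= 4 * PI / m ^ 4 * Rabs (k - e).
Proof.
  intros Hm Hk0 He0 Hk He Hxi. pose proof PI_RGT_0 as Hpi.
  pose proof (ellK_bounds e m Hm He) as HK0.
  pose proof (ellK_bounds k m Hm Hk) as HK1.
  set (K0 := ellK e) in *. set (u := 4 * K0 / (2 * PI) * xi).
  assert (Hu : 0 <= u <= 2 * PI / m).
  { unfold u. split. apply Rmult_le_pos. apply Rdiv_le_0_compat; lra. lra.
    replace (2 * PI / m) with (4 * (PI / 2 / m) / (2 * PI) * (2 * PI)) by (field; lra).
    apply Rmult_le_compat. apply Rdiv_le_0_compat; lra. lra.
    unfold Rdiv. apply Rmult_le_compat_r. apply Rlt_le, Rinv_0_lt_compat; lra. lra. lra. }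
  assert (Hex : exists phi, ellF phi e = u).
  { pose proof (ellF_pos_bounds e m u Hm He ltac:(lra)).
    destruct (IVT_gen (fun x => ellF x e) 0 u u (ellF_cont e m Hm He)) as [x [_ Hx]].
    - rewrite ellF_0. pose proof (Rmin_l 0 (ellF u e)). pose proof (Rmax_r 0 (ellF u e)). lra.
    - exists x. exact Hx. }
  pose proof (epsilon_spec (inhabits 0) (fun phi => ellF phi e = u) Hex) as Hphi.
  fold (am u e) in Hphi. set (phi := am u e) in *.
  assert (Hp0 : 0 <= phi).
  { destruct (Rle_dec 0 phi); auto. pose proof (ellF_neg e m phi Hm He ltac:(lra)). lra. }
  assert (Hpu : phi <= u) by (pose proof (ellF_pos_bounds e m phi Hm He Hp0); lra).
  assert (Exi : xi = 2 * PI * u / (4 * K0)) by (unfold u; field; lra).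
  rewrite Exi.
  apply (alg_bound (ellF phi k) u (ellK k) K0 (Rabs (k - e)) m phi); auto; try lra.
  - apply Rabs_pos.
  - rewrite <- Hphi. apply ellF_lip_k; auto.
  - unfold K0, ellK. pose proof (ellF_lip_k k e m (PI/2) Hm Hk0 He0 Hk He ltac:(lra)). exact H.
Qed.

Definition Pbnd (a b M : R) : Prop :=
  forall q : nat, (3 <= q)%nat ->
    Rabs (k_q a b q - ecc a b) <= M / (INR q) ^ 2 /\
    forall xi : R, 0 <= xi < 2 * PI ->
      Rabs (xi_q a b q (phi_inf a b xi) - xi) <= M / (INR q) ^ 2.

Lemma ecc_sq a b : 0 < b < a -> ecc a b ^ 2 = (a^2 - b^2) / a^2 /\ 0 < ecc a b.
Proof.
  intros Hab. unfold ecc.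
  assert (0 < 1 - b^2/a^2).
  { assert (b^2/a^2 < 1). apply (Rmult_lt_reg_r (a^2)). nra.
    unfold Rdiv. rewrite Rmult_assoc, Rinv_l by nra. nra. lra. }
  split. rewrite pow2_sqrt by lra. field. lra.
  apply sqrt_lt_R0; lra.
Qed.

Lemma core a b : 0 < b < a -> exists M, Pbnd a b M.
Proof.
  intros Hab. pose proof PI_RGT_0 as Hpi.
  set (m := b * dlt a b / a). assert (Hm : 0 < m) by apply mpos, Hab.
  destruct (ecc_sq a b Hab) as [Ee He]. set (e := ecc a b) in *.
  set (M1 := (b * PI / m)^2 / (a^2 * e)).
  assert (HM1 : 0 <= M1) by (unfold M1; apply Rdiv_le_0_compat; [apply pow2_ge_0 | apply Rmult_lt_0_compat; nra]).
  exists (M1 * (1 + 4 * PI / m ^ 4)).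
  intros q Hq.
  assert (HQ : 3 <= INR q) by (replace 3 with (INR 3) by (simpl; ring); apply le_INR; auto).
  destruct (kq_props a b q Hab Hq) as [Hl [Hk [Hlb Ek]]]. fold m in Hk, Hlb.
  set (l := lam_q a b q) in *. set (k := k_q a b q) in *. set (Q := INR q) in *.
  assert (Hk0 : 0 <= k) by (unfold k, k_q, k_lam; apply sqrt_pos).
  assert (He2 : e^2 <= k^2).
  { rewrite Ee, Ek. unfold Rdiv. apply Rmult_le_compat_l. nra. apply Rinv_le_contravar; nra. }
  assert (Hdk : Rabs (k - e) <= M1 / Q ^ 2).
  { assert (Hke : e <= k) by nra.
    rewrite Rabs_pos_eq by lra.
    assert (k^2 - e^2 <= l^2 / a^2).
    { rewrite Ee, Ek. assert (a^2 - b^2 <= a^2 - l^2) by nra.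
      replace ((a ^ 2 - b ^ 2) / (a ^ 2 - l ^ 2) - (a ^ 2 - b ^ 2) / a ^ 2)
        with ((a^2 - b^2) / (a^2 - l^2) * (l^2 / a^2)) by (field; nra).
      rewrite <- (Rmult_1_l (l^2/a^2)) at 2.
      apply Rmult_le_compat_r. apply Rdiv_le_0_compat; nra.
      apply (Rmult_le_reg_r (a^2 - l^2)). nra. unfold Rdiv. rewrite Rmult_assoc, Rinv_l; nra. }
    assert (k - e <= l^2 / (a^2 * e)).
    { apply (Rmult_le_reg_r e). lra. replace (l ^ 2 / (a ^ 2 * e) * e) with (l^2/a^2) by (field; nra).
      nra. }
    assert (l^2 <= (b * PI / m)^2 / Q^2).
    { replace ((b * PI / m)^2 / Q^2) with ((b * PI / (m * Q))^2) by (field; lra).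
      apply pow_incr. lra. }
    apply Rle_trans with (l ^ 2 / (a ^ 2 * e)). lra.
    unfold M1. replace ((b * PI / m) ^ 2 / (a ^ 2 * e) / Q ^ 2) with ((b * PI / m) ^ 2 / Q ^ 2 / (a ^ 2 * e)) by (field; nra).
    apply (Rmult_le_compat_r (/ (a^2*e)) (l^2) ((b * PI / m) ^ 2 / Q ^ 2)). apply Rlt_le, Rinv_0_lt_compat; apply Rmult_lt_0_compat; nra. lra. }
  assert (HQ2 : 0 < Q ^ 2) by nra.
  assert (Hfac : 0 <= 4 * PI / m ^ 4) by (apply Rdiv_le_0_compat; [lra | apply pow_lt; lra]).
  split.
  - apply Rle_trans with (M1 / Q^2). exact Hdk.
    unfold Rdiv. apply Rmult_le_compat_r. apply Rlt_le, Rinv_0_lt_compat; lra. nra.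
  - intros xi Hxi. unfold xi_q, phi_inf. fold e k.
    eapply Rle_trans. apply (xi_bound k e m xi Hm Hk0 (Rlt_le _ _ He) Hk ltac:(lra) Hxi).
    apply Rle_trans with (4 * PI / m ^ 4 * (M1 / Q ^ 2)).
    apply Rmult_le_compat_l; auto.
    replace (M1 * (1 + 4 * PI / m ^ 4) / Q ^ 2) with (M1 / Q^2 + 4 * PI / m ^ 4 * (M1 / Q ^ 2)) by (field; lra).
    assert (0 <= M1 / Q^2) by (apply Rdiv_le_0_compat; lra). lra.
Qed.

Definition Mof a b := epsilon (inhabits 0) (fun M => Pbnd a b M).

Lemma ellF_zero phi : ellF phi 0 = phi.
Proof.
  unfold ellF. rewrite (RInt_ext _ (fun _ => 1)). rewrite RInt_one. ring.
  intros. replace (1 - 0 ^ 2 * sin x ^ 2) with 1 by ring. rewrite sqrt_1. apply Rinv_1.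
Qed.

Theorem lemma9 :
  exists C : R -> R -> R,
    forall a b : R, 0 < b -> b <= a ->
    forall q : nat, (3 <= q)%nat ->
      Rabs (k_q a b q - ecc a b) <= C (ecc a b) (semifocal a b) / (INR q) ^ 2 /\
      forall xi : R, 0 <= xi < 2 * PI ->
        Rabs (xi_q a b q (phi_inf a b xi) - xi)
          <= C (ecc a b) (semifocal a b) / (INR q) ^ 2.
Proof.
  exists (fun e c => Rabs (Mof (c / e) (sqrt ((c / e) ^ 2 - c ^ 2)))).
  intros a b Hb Hab q Hq. pose proof PI_RGT_0 as Hpi.
  assert (HQ : 3 <= INR q) by (replace 3 with (INR 3) by (simpl; ring); apply le_INR; auto).
  assert (HQ2 : 0 < INR q ^ 2) by nra.
  set (CC := Rabs (Mof (semifocal a b / ecc a b) (sqrt ((semifocal a b / ecc a b) ^ 2 - semifocal a b ^ 2)))).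
  assert (HCC : 0 <= CC / INR q ^ 2) by (apply Rdiv_le_0_compat; [apply Rabs_pos | lra]).
  destruct (Req_dec a b) as [Eab | Nab].
  - subst a.
    assert (Ek : k_q b b q = 0).
    { unfold k_q, k_lam. replace (b^2 - b^2) with 0 by ring. unfold Rdiv. rewrite Rmult_0_l. apply sqrt_0. }
    assert (Ee : ecc b b = 0).
    { unfold ecc. replace (1 - b^2 / b^2) with 0 by (field; lra). apply sqrt_0. }
    split.
    + rewrite Ek, Ee, Rminus_0_r, Rabs_R0. exact HCC.
    + intros xi Hxi. unfold xi_q, phi_inf. rewrite Ek, Ee.
      unfold ellK. rewrite !ellF_zero.
      replace (4 * (PI / 2) / (2 * PI) * xi) with xi by (field; lra).
      assert (Ham : ellF (am xi 0) 0 = xi).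
      { apply (epsilon_spec (inhabits 0) (fun phi => ellF phi 0 = xi)). exists xi. apply ellF_zero. }
      rewrite ellF_zero in Ham. rewrite Ham.
      replace (2 * PI / (4 * (PI / 2)) * xi - xi) with 0 by (field; lra). rewrite Rabs_R0. exact HCC.
  - assert (Hlt : 0 < b < a) by lra.
    destruct (ecc_sq a b Hlt) as [Ee He].
    assert (Hc2 : 0 <= a^2 - b^2) by nra.
    assert (Ec : semifocal a b = ecc a b * a).
    { rewrite <- (sqrt_pow2 (semifocal a b)) by apply sqrt_pos.
      rewrite <- (sqrt_pow2 (ecc a b * a)) by nra. f_equal.
      unfold semifocal at 1. rewrite pow2_sqrt by lra.
      replace ((ecc a b * a)^2) with (ecc a b ^ 2 * a^2) by ring. rewrite Ee. field. lra. }
    assert (E1 : semifocal a b / ecc a b = a) by (rewrite Ec; field; lra).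
    assert (E2 : sqrt ((semifocal a b / ecc a b) ^ 2 - semifocal a b ^ 2) = b).
    { rewrite E1. unfold semifocal. rewrite pow2_sqrt by lra.
      replace (a ^ 2 - (a ^ 2 - b ^ 2)) with (b^2) by ring. apply sqrt_pow2. lra. }
    unfold CC in *. rewrite E1, E2 in *.
    assert (HP : Pbnd a b (Mof a b)).
    { apply (epsilon_spec (inhabits 0) (fun M => Pbnd a b M)). apply core. exact Hlt. }
    destruct (HP q Hq) as [H1 H2].
    assert (Hle : Mof a b / INR q ^ 2 <= Rabs (Mof a b) / INR q ^ 2).
    { unfold Rdiv. apply Rmult_le_compat_r. apply Rlt_le, Rinv_0_lt_compat; lra. apply Rle_abs. }
    split. lra. intros xi Hxi. specialize (H2 xi Hxi). lra.
Qed.
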